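(* Let $S$ be a numerical semigroup with minimal generators $a_1<a_2<\cdots<a_\nu$ ($\nu\ge 2$), multiplicity $\mu=a_1$ and conductor $c$, with $a_2>\frac{c+\mu}{3}$. Let $P=\{a_1,\dots,a_\nu\}$, $P_1=\{a\in P\setminus\{\mu\}: \tfrac13(c+\mu)<a<\tfrac12(c+\mu)\}$, $P_2=\{a\in P\setminus\{\mu\}: \tfrac12(c+\mu)\le a<\tfrac23(c+\mu)\}$, $q_i=|P_i|$, let $\Sigma$ be the set of Apéry pairs and $\sigma$ the maximal cardinality of an independent set of Apéry pairs. If $\max\{q_1,q_2\}>0$, then $\sigma\ge\frac{|\Sigma|}{\max\{q_1,q_2\}}$.
   Context: A numerical semigroup is a submonoid $S\subseteq\mathbb{N}$ with finite complement; $\nu$ is the number of minimal generators, $\mu$ the smallest one, $c$ the least integer with $c+\mathbb{N}\subseteq S$. $\mathrm{Ap}(S)=\{x\in S: x-\mu\notin S\}$. An Apéry pair is a pair $(a,b)\in P_1\times P_2$ with $a+b\in\mathrm{Ap}(S)$. A set $\{(a_i,b_i)\}_{i=1}^n$ of Apéry pairs is independent if $a_i\ne a_j$ and $b_i\ne b_j$ for all $i\ne j$. *)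

(* Defs.v *)
From mathcomp Require Import all_boot all_order all_algebra.
Set Implicit Arguments. Unset Strict Implicit. Unset Printing Implicit Defensive.

Definition numerical_semigroup (S : pred nat) : Prop :=
  [/\ S 0, (forall x y, S x -> S y -> S (x + y)) & exists N, forall n, N <= n -> S n].

Definition is_multiplicity (S : pred nat) (mu : nat) : Prop :=
  [/\ 0 < mu, S mu & forall x, 0 < x -> S x -> mu <= x].

Definition is_conductor (S : pred nat) (c : nat) : Prop :=
  (forall n, c <= n -> S n) /\
  (forall c', (forall n, c' <= n -> S n) -> c <= c').

Definition mingen (S : pred nat) (a : nat) : bool :=
  [&& S a, 0 < a & ~~ has (fun x => S x && S (a - x)) (iota 1 a.-1)].

Definition apery (S : pred nat) (mu x : nat) : bool :=
  S x && ~~ ((mu <= x) && S (x - mu)).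

(* P1 = {a in P \ {mu} : (c+mu)/3 < a < (c+mu)/2}; such a are < c+mu. *)
Definition P1 (S : pred nat) (mu c : nat) : seq nat :=
  [seq a <- iota 0 (c + mu) |
     [&& mingen S a, a != mu, c + mu < 3 * a & 2 * a < c + mu]].

(* P2 = {a in P \ {mu} : (c+mu)/2 <= a < 2(c+mu)/3}; such a are < c+mu. *)
Definition P2 (S : pred nat) (mu c : nat) : seq nat :=
  [seq a <- iota 0 (c + mu) |
     [&& mingen S a, a != mu, c + mu <= 2 * a & 3 * a < 2 * (c + mu)]].

Definition apery_pairs (S : pred nat) (mu c : nat) : seq (nat * nat) :=
  [seq ab <- [seq (a, b) | a <- P1 S mu c, b <- P2 S mu c] |
     apery S mu (ab.1 + ab.2)].

Definition independent (S : pred nat) (mu c : nat) (I : seq (nat * nat)) : bool :=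
  [&& uniq I, all (mem (apery_pairs S mu c)) I,
      uniq (map fst I) & uniq (map snd I)].

Definition is_max_independent (S : pred nat) (mu c sigma : nat) : Prop :=
  (exists2 I, independent S mu c I & size I = sigma) /\
  (forall I, independent S mu c I -> size I <= sigma).

(* Main.v *)
Require Import Defs.
From mathcomp Require Import all_boot all_order all_algebra.
Import Order.TTheory GRing.Theory Num.Theory.
From mathcomp Require Import zify.
Import Order.TTheory GRing.Theory Num.Theory.
Lemma modeq_small {m x y : nat} : x < m -> y < m -> x %% m = y %% m -> x = y.
Proof. by move=> hx hy; rewrite !modn_small. Qed.

Lemma key (p1 p2 : seq nat) (AP : seq (nat*nat)) m sigma :
 uniq AP -> {subset AP <= [seq (a,b) | a <- p1, b <- p2]} ->
 size p1 <= m -> size p2 <= m -> 0 < m ->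
 (forall I, uniq I -> {subset I <= AP} -> uniq (map fst I) -> uniq (map snd I) -> size I <= sigma) ->
 size AP <= m * sigma.
Proof.
move=> uAP sub s1 s2 m0 H.
pose cls (ab : nat * nat) := (index ab.2 p2 + m - index ab.1 p1) %% m.
have memP : forall ab, ab \in AP -> (ab.1 \in p1) /\ (ab.2 \in p2).
  move=> [a b] /sub /allpairsP [[x y] [hx hy /= [-> ->]]]; by [].
have idx : forall ab, ab \in AP -> index ab.1 p1 < m /\ index ab.2 p2 < m.
  move=> ab /memP [h1 h2]; split.
    by apply: leq_trans s1; rewrite index_mem.
  by apply: leq_trans s2; rewrite index_mem.
have cnt : forall t, count (fun ab => cls ab < t) AP <= t * sigma.
  elim=> [|t IH].
    by rewrite (eq_count (a2 := pred0)) ?count_pred0 // => x; rewrite ltn0.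
  have -> : count (fun ab => cls ab < t.+1) AP =
            count (fun ab => cls ab < t) AP + count (fun ab => cls ab == t) AP.
    rewrite -count_predUI (@eq_count _ (predI _ _) pred0); last first.
      by move=> x /=; case: ltngtP.
    rewrite count_pred0 addn0; apply: eq_count => x /=.
    by rewrite ltnS leq_eqVlt orbC.
  rewrite mulSn addnC leq_add //.
  rewrite -size_filter; apply: H.
  - exact: filter_uniq.
  - by move=> x; rewrite mem_filter => /andP[].
  - rewrite map_inj_in_uniq ?filter_uniq //.
    move=> [a b] [a' b']; rewrite !mem_filter => /andP[/eqP c1 h1] /andP[/eqP c2 h2] /= ea.
    subst a'.
    have [i1 j1] := idx _ h1. have [i2 j2] := idx _ h2.
    move: (memP _ h1) (memP _ h2) => /= [_ hb] [_ hb'].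
    move: c1 c2 i1 i2 j1 j2; rewrite /cls /= => c1 c2 i1 i2 j1 j2.
    have e : index b p2 = index b' p2.
      apply: (modeq_small j1 j2).
      apply/eqP; rewrite -(eqn_modDr (m - index a p1)) !addnBA ?(ltnW i1) //.
      by apply/eqP; rewrite c1 c2.
    by rewrite -(nth_index 0 hb) e nth_index.
  - rewrite map_inj_in_uniq ?filter_uniq //.
    move=> [a b] [a' b']; rewrite !mem_filter => /andP[/eqP c1 h1] /andP[/eqP c2 h2] /= eb.
    subst b'.
    have [i1 j1] := idx _ h1. have [i2 j2] := idx _ h2.
    move: (memP _ h1) (memP _ h2) => /= [ha _] [ha' _].
    move: c1 c2 i1 i2 j1 j2; rewrite /cls /= => c1 c2 i1 i2 j1 j2.
    have e0 : (index b p2 + m - index a p1) %% m = (index b p2 + m - index a' p1) %% m by rewrite c1 c2.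
    have e1 : (index b p2 + m - index a p1 + (index a p1 + index a' p1)) %% m =
              (index b p2 + m - index a' p1 + (index a p1 + index a' p1)) %% m.
      by rewrite -modnDml e0 modnDml.
    have r1 : index b p2 + m - index a p1 + (index a p1 + index a' p1) =
              m + (index b p2 + index a' p1) by lia.
    have r2 : index b p2 + m - index a' p1 + (index a p1 + index a' p1) =
              m + (index b p2 + index a p1) by lia.
    rewrite r1 r2 in e1.
    rewrite !modnDl in e1.
    move/eqP: e1; rewrite eqn_modDl => /eqP e1.
    have e : index a p1 = index a' p1 by apply: (modeq_small i1 i2).
    by rewrite -(nth_index 0 ha) e nth_index.
have := cnt m.
rewrite (eq_in_count (a2 := predT)) ?count_predT // => x _ /=.
by rewrite ltn_mod.
Qed.
Theorem proposition4p1 (S : pred nat) (mu c a2 sigma : nat) :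
  numerical_semigroup S ->
  is_multiplicity S mu ->
  is_conductor S c ->
  (* a2 is the second smallest minimal generator (so nu >= 2) *)
  mingen S a2 -> a2 != mu ->
  (forall a, mingen S a -> a != mu -> a2 <= a) ->
  (* a2 > (c + mu) / 3 *)
  c + mu < 3 * a2 ->
  is_max_independent S mu c sigma ->
  0 < maxn (size (P1 S mu c)) (size (P2 S mu c)) ->
  ((size (apery_pairs S mu c))%:R / (maxn (size (P1 S mu c)) (size (P2 S mu c)))%:R
     <= (sigma%:R : rat))%R.
Proof.
move=> _ _ _ _ _ _ _ [[I0 _ _] Hmax] m0.
set m := maxn _ _.
have le : size (apery_pairs S mu c) <= m * sigma.
  apply: (@key (P1 S mu c) (P2 S mu c)) => //.
  - rewrite filter_uniq // allpairs_uniq //.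
    + by rewrite filter_uniq // iota_uniq.
    + by rewrite filter_uniq // iota_uniq.
    by move=> [x y] [x' y'] _ _ [-> ->].
  - by move=> x; rewrite mem_filter => /andP[].
  - exact: leq_maxl.
  - exact: leq_maxr.
  - move=> I uI sI u1 u2; apply: Hmax.
    by apply/and4P; split => //; apply/allP => x /sI.
rewrite ler_pdivrMr ?ltr0n // -natrM ler_nat mulnC //.
Qed.
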